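(* Let $G$ be a graph and $\lambda>0$. If two nodes $a,b$ of $G$ are $(\ell,d)$ connected, then $$\mathbb{E}_G[x_ax_b]\;\ge\;1-\frac{2}{1+\dfrac{(1+(\tanh\lambda)^{\ell})^{d}}{(1-(\tanh\lambda)^{\ell})^{d}}}.$$
   Context: For a graph $G=(V,E)$ and $\lambda>0$, $f_G(\mathbf{x})=\frac{1}{Z}\exp\big(\sum_{(i,j)\in E}\lambda x_ix_j\big)$ on $\{-1,+1\}^V$, and $\mathbb{E}_G$ denotes expectation under $f_G$. Two nodes $a,b$ are $(\ell,d)$ connected if there exist $d$ node-disjoint paths between $a$ and $b$, each of length at most $\ell$. *)

(* Defs.v *)
From mathcomp Require Import all_boot all_order all_algebra.
From mathcomp Require Import reals sequences exp.
Set Implicit Arguments. Unset Strict Implicit. Unset Printing Implicit Defensive.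
Import Order.TTheory GRing.Theory Num.Theory.
Local Open Scope ring_scope.

Section IsingDefs.
Variable R : realType.
Variable V : finType.

Definition simple_graph (e : rel V) : Prop :=
  (forall u v, e u v = e v u) /\ (forall u, ~~ e u u).

Definition spin (b : bool) : R := if b then 1 else -1.

(* Ising energy sum_{(i,j) in E} lambda x_i x_j, each unordered edge counted once
   (the sum over ordered adjacent pairs is halved). *)
Definition ising_energy (e : rel V) (lam : R) (x : {ffun V -> bool}) : R :=
  (lam / 2) * \sum_(i : V) \sum_(j : V | e i j) spin (x i) * spin (x j).

Definition ising_weight (e : rel V) (lam : R) (x : {ffun V -> bool}) : R :=
  expR (ising_energy e lam x).

Definition ising_Z (e : rel V) (lam : R) : R :=
  \sum_(x : {ffun V -> bool}) ising_weight e lam x.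

Definition ising_corr (e : rel V) (lam : R) (a b : V) : R :=
  (\sum_(x : {ffun V -> bool}) spin (x a) * spin (x b) * ising_weight e lam x)
  / ising_Z e lam.

(* A (simple) path from a to b is the vertex sequence a :: p with consecutive
   vertices adjacent, ending at b, with no repeated vertex. Its length (number of
   edges) is size p. *)
Definition is_path_between (e : rel V) (a b : V) (p : seq V) : bool :=
  [&& path e a p, last a p == b & uniq (a :: p)].

(* Internal vertices of the path a :: p (all except the two endpoints). *)
Definition internal (a : V) (p : seq V) : seq V := behead (belast a p).

Definition ld_connected (e : rel V) (l d : nat) (a b : V) : Prop :=
  exists P : 'I_d -> seq V,
    injective P /\
    (forall i, is_path_between e a b (P i) /\ (size (P i) <= l)%N) /\
    (forall i j, i != j ->
       all (fun v => v \notin internal a (P j)) (internal a (P i))).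

End IsingDefs.

Definition tanhR {R : realType} (x : R) : R :=
  (expR x - expR (- x)) / (expR x + expR (- x)).

(* Main.v *)
Require Import Defs.
From mathcomp Require Import all_boot all_order all_algebra.
From mathcomp Require Import reals sequences exp.
From mathcomp Require Import ring lra zify.
From Stdlib Require Import FunctionalExtensionality.
Set Implicit Arguments. Unset Strict Implicit. Unset Printing Implicit Defensive.
Import Order.TTheory GRing.Theory Num.Theory.
Local Open Scope ring_scope.

Section GKS.
Variable R : realType.
Variable V : finType.
Notation X := {ffun V -> bool}.
Notation sp := (@spin R).

Definition mono (p : seq V) (x : X) : R := \prod_(i <- p) sp (x i).

Lemma spin_sq b : sp b * sp b = 1.
Proof. by case: b; rewrite /spin ?mulr1 ?mulrNN ?mulr1. Qed.

Lemma mono_cat p q x : mono (p ++ q) x = mono p x * mono q x.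
Proof. by rewrite /mono big_cat. Qed.

Lemma mono_sq p x : mono p x * mono p x = 1.
Proof.
rewrite /mono -big_split /=; rewrite big1 // => i _; exact: spin_sq.
Qed.

Lemma mono_pm p x : mono p x = 1 \/ mono p x = -1.
Proof.
have := mono_sq p x; rewrite -expr2 => /eqP; rewrite sqrf_eq1.
by case/orP => /eqP ->; [left|right].
Qed.

Lemma mono_le1 p x : mono p x <= 1.
Proof. by case: (mono_pm p x) => ->; lra. Qed.

Definition mulx (x s : X) : X := [ffun i => x i == s i].

Lemma spin_eq (b c : bool) : sp (b == c) = sp b * sp c.
Proof. by case: b; case: c; rewrite /spin /=; lra. Qed.

Lemma mono_mulx p x s : mono p (mulx x s) = mono p x * mono p s.
Proof.
rewrite /mono -big_split /=; apply: eq_bigr => i _.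
by rewrite ffunE spin_eq.
Qed.

Lemma mulx_inj x : injective (mulx x).
Proof.
move=> s t /ffunP H; apply/ffunP => i; have := H i; rewrite !ffunE.
by case: (x i); case: (s i); case: (t i).
Qed.

Lemma prod_count (F : V -> R) (p : seq V) :
  \prod_(i <- p) F i = \prod_(i : V) F i ^+ count_mem i p.
Proof.
elim: p => [|j p IH]; first by rewrite big_nil big1 // => i _; rewrite expr0.
rewrite big_cons IH /=.
under [in RHS]eq_bigr => i _ do rewrite exprD.
rewrite big_split /=; congr (_ * _).
rewrite (bigD1 j) //= eqxx expr1 big1 ?mulr1 // => i /negbTE.
by rewrite eq_sym => ->; rewrite expr0.
Qed.

Lemma sum_mono_ge0 p : 0 <= \sum_(x : X) mono p x.
Proof.
rewrite /mono.
under eq_bigr => x _ do rewrite (prod_count (fun i => sp (x i))).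
rewrite -(bigA_distr_bigA (fun i (b : bool) => sp b ^+ count_mem i p)) /=.
apply: prodr_ge0 => i _; rewrite big_bool /spin expr1n.
rewrite -signr_odd; case: (odd _); rewrite ?expr1 ?expr0 /=; lra.
Qed.

Definition good (F : X -> R) : Prop :=
  exists (I : finType) (c : I -> R) (m : I -> seq V),
    (forall i, 0 <= c i) /\ forall x, F x = \sum_(i : I) c i * mono (m i) x.

Lemma good_sum_ge0 F : good F -> 0 <= \sum_(x : X) F x.
Proof.
case=> I [c [m [hc hF]]].
under eq_bigr => x _ do rewrite hF.
rewrite exchange_big /=; apply: sumr_ge0 => i _.
rewrite -mulr_sumr; apply: mulr_ge0 => //; exact: sum_mono_ge0.
Qed.

Lemma goodM F G : good F -> good G -> good (fun x => F x * G x).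
Proof.
case=> I [c [m [hc hF]]]; case=> J [c' [m' [hc' hG]]].
exists (I * J)%type, (fun p => c p.1 * c' p.2), (fun p => m p.1 ++ m' p.2).
split; first by move=> [i j]; apply: mulr_ge0.
move=> x; rewrite hF hG mulr_suml.
under eq_bigr => i _ do rewrite mulr_sumr.
rewrite pair_big /=; apply: eq_bigr => [[i j]] _ /=.
rewrite mono_cat; ring.
Qed.

Lemma good_lin (c d : R) p : 0 <= c -> 0 <= d -> good (fun x => c + d * mono p x).
Proof.
move=> hc hd; exists bool, (fun b => if b then c else d), (fun b => if b then [::] else p).
split; first by case.
by move=> x; rewrite big_bool /= /mono big_nil mulr1.
Qed.

Lemma good_mono p : good (mono p).
Proof.
exists 'I_1, (fun _ => 1), (fun _ => p); split => // x.
by rewrite big_ord1 mul1r.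
Qed.

Lemma good_ext F G : good F -> (forall x, F x = G x) -> good G.
Proof. by move=> hF e; have -> : G = F by apply: functional_extensionality => x; rewrite e. Qed.

Inductive ferro : (X -> R) -> Prop :=
| ferro1 : ferro (fun _ => 1)
| ferroF W (c d : R) p : ferro W -> 0 <= d -> d < c ->
    ferro (fun x => W x * (c + d * mono p x)).

Lemma ferro_pos W : ferro W -> forall x, 0 < W x.
Proof.
elim=> [|W' c d p _ IH hd hdc] x; first by [].
apply: mulr_gt0 => //; case: (mono_pm p x) => ->; lra.
Qed.

Lemma ferro_sq W s : ferro W -> good (fun x => W x * W (mulx x s)).
Proof.
elim=> [|W' c d p _ IH hd hdc].
  apply: (good_ext (@good_lin 1 0 [::] ler01 (lexx 0))) => x /=.
  by rewrite mul0r addr0 mulr1.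
apply: (good_ext (goodM IH (@good_lin (c * c + d * d * mono p s) (c * d * (1 + mono p s)) p _ _))).
- case: (mono_pm p s) => ->; nra.
- case: (mono_pm p s) => ->; nra.
move=> x; rewrite mono_mulx.
have h := mono_sq p x.
set m := mono p x; set n := mono p s.
have -> : (c * c + d * d * n + c * d * (1 + n) * m) = (c + d * m) * (c + d * (m * n)).
  apply/eqP; rewrite -subr_eq0; apply/eqP.
  transitivity (d * d * n * (1 - m * m)); first by ring.
  by rewrite h subrr mulr0.
ring.
Qed.

Lemma dsumD (F G : X -> X -> R) :
  \sum_(x : X) \sum_(y : X) (F x y + G x y) =
  \sum_(x : X) \sum_(y : X) F x y + \sum_(x : X) \sum_(y : X) G x y.
Proof. by rewrite -big_split; apply: eq_bigr => x _; rewrite big_split. Qed.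

Lemma dsumB (F G : X -> X -> R) :
  \sum_(x : X) \sum_(y : X) (F x y - G x y) =
  \sum_(x : X) \sum_(y : X) F x y - \sum_(x : X) \sum_(y : X) G x y.
Proof. by rewrite -sumrB; apply: eq_bigr => x _; rewrite sumrB. Qed.

Lemma prod_sums (f g : X -> R) :
  (\sum_(x : X) f x) * (\sum_(y : X) g y) = \sum_(x : X) \sum_(y : X) f x * g y.
Proof. rewrite mulr_suml; apply: eq_bigr => x _; by rewrite mulr_sumr. Qed.

Definition wsum (W : X -> R) (F : X -> R) := \sum_(x : X) F x * W x.

Lemma wsum_gt0 W : ferro W -> 0 < wsum W (fun _ => 1).
Proof.
move=> hW; rewrite /wsum (bigD1 [ffun => true]) //=.
apply: ltr_wpDr; first by apply: sumr_ge0 => x _; rewrite mul1r; apply/ltW/ferro_pos.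
by rewrite mul1r; apply: ferro_pos.
Qed.

Lemma gks2 W p q : ferro W ->
  wsum W (mono p) * wsum W (mono q) <= wsum W (mono (p ++ q)) * wsum W (fun _ => 1).
Proof.
move=> hW.
set A := mono p; set B := mono q.
have key : 0 <= \sum_(x : X) \sum_(y : X) (A x - A y) * (B x - B y) * (W x * W y).
  have -> : \sum_(x : X) \sum_(y : X) (A x - A y) * (B x - B y) * (W x * W y) =
     \sum_(s : X) ((1 - A s) * (1 - B s)) *
        \sum_(x : X) mono (p ++ q) x * (W x * W (mulx x s)).
    transitivity (\sum_(x : X) \sum_(s : X) (A x - A (mulx x s)) * (B x - B (mulx x s))
                        * (W x * W (mulx x s))).
      by apply: eq_bigr => x _; rewrite (reindex_inj (mulx_inj (x:=x))).
    rewrite exchange_big /=; apply: eq_bigr => s _; rewrite mulr_sumr.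
    apply: eq_bigr => x _; rewrite /A /B !mono_mulx mono_cat; ring.
  apply: sumr_ge0 => s _; apply: mulr_ge0.
    by apply: mulr_ge0; rewrite subr_ge0; apply: mono_le1.
  have := good_sum_ge0 (goodM (good_mono (p ++ q)) (ferro_sq s hW)); done.
have e1 : \sum_(x : X) \sum_(y : X) (A x - A y) * (B x - B y) * (W x * W y) =
    2 * (wsum W (mono (p ++ q)) * wsum W (fun _ => 1)) - 2 * (wsum W A * wsum W B).
  pose F1 x y := A x * B x * W x * W y.
  pose F2 x y := A x * W x * (B y * W y).
  have pw : forall x y, (A x - A y) * (B x - B y) * (W x * W y) =
      (F1 x y + F1 y x) - (F2 x y + F2 y x) by move=> x y; rewrite /F1 /F2; ring.
  under eq_bigr => x _ do under eq_bigr => y _ do rewrite pw.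
  rewrite (dsumB (fun x y => F1 x y + F1 y x)) !dsumD.
  have ex : forall F : X -> X -> R, \sum_(x : X) \sum_(y : X) F y x = \sum_(x : X) \sum_(y : X) F x y.
    by move=> F; rewrite exchange_big.
  rewrite (ex F1) (ex F2).
  rewrite /wsum !prod_sums /F1 /F2.
  have -> : \sum_(x : X) \sum_(y : X) mono (p ++ q) x * W x * (1 * W y) =
     \sum_(x : X) \sum_(y : X) A x * B x * W x * W y.
    by apply: eq_bigr => x _; apply: eq_bigr => y _; rewrite mono_cat mul1r.
  set S1 := (\sum_(x : X) \sum_(y : X) A x * B x * W x * W y).
  set S2 := (\sum_(x : X) \sum_(y : X) A x * W x * (B y * W y)).
  ring.
rewrite e1 in key; lra.
Qed.

Definition corr (W : X -> R) (F : X -> R) := wsum W F / wsum W (fun _ => 1).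

Lemma wsum_factor W c d p q :
  wsum (fun x => W x * (c + d * mono q x)) (mono p) =
  c * wsum W (mono p) + d * wsum W (mono (p ++ q)).
Proof.
rewrite /wsum !mulr_sumr -big_split /=; apply: eq_bigr => x _.
rewrite mono_cat; ring.
Qed.

Lemma corr_factor W c d p q : ferro W -> 0 <= d -> d < c ->
  corr W (mono p) <= corr (fun x => W x * (c + d * mono q x)) (mono p).
Proof.
move=> hW hd hdc.
have h1 := wsum_gt0 hW.
have h2 := wsum_gt0 (ferroF q hW hd hdc).
rewrite /corr ler_pdivlMr // mulrAC ler_pdivrMr //.
have e1 : (fun _ : X => 1 : R) = mono [::] by apply: functional_extensionality => x; rewrite /mono big_nil.
have g := gks2 p q hW.
rewrite e1 in g *.
rewrite !wsum_factor /=.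
nra.
Qed.

Lemma ferro_mul W U : ferro W -> ferro U -> ferro (fun x => W x * U x).
Proof.
move=> hW; elim=> [|U' c d q _ IH hd hdc].
  by have -> : (fun x => W x * 1) = W by apply: functional_extensionality => x; rewrite mulr1.
have -> : (fun x => W x * (U' x * (c + d * mono q x))) =
          (fun x => (W x * U' x) * (c + d * mono q x)).
  by apply: functional_extensionality => x; rewrite mulrA.
exact: ferroF.
Qed.

Lemma corr_mono W U p : ferro W -> ferro U ->
  corr W (mono p) <= corr (fun x => W x * U x) (mono p).
Proof.
move=> hW; elim=> [|U' c d q hU IH hd hdc].
  by have -> : (fun x => W x * 1) = W by apply: functional_extensionality => x; rewrite mulr1.
have -> : (fun x => W x * (U' x * (c + d * mono q x))) =
          (fun x => (W x * U' x) * (c + d * mono q x)).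
  by apply: functional_extensionality => x; rewrite mulrA.
apply: (le_trans IH); apply: corr_factor => //; exact: ferro_mul.
Qed.

End GKS.

Section Weights.
Variable R : realType.
Variable V : finType.
Notation X := {ffun V -> bool}.
Notation sp := (@spin R).

Definition Wt (J : V -> V -> R) (x : X) : R :=
  expR (\sum_(i : V) \sum_(j : V) J i j * (sp (x i) * sp (x j))).

Definition chR (m : R) := (expR m + expR (- m)) / 2.
Definition shR (m : R) := (expR m - expR (- m)) / 2.

Lemma expR_pm (m y : R) : y = 1 \/ y = -1 -> expR (m * y) = chR m + shR m * y.
Proof. by case=> ->; rewrite /chR /shR ?mulr1 ?mulrN1; field. Qed.

Lemma shR_ge0 m : 0 <= m -> 0 <= shR m.
Proof.
move=> hm; rewrite /shR; apply: divr_ge0 => //; rewrite subr_ge0 ler_expR; lra.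
Qed.

Lemma shR_lt_chR m : shR m < chR m.
Proof. rewrite /shR /chR; have := expR_gt0 (- m); lra. Qed.

Lemma ferro_prod (T : Type) (r : seq T) (F : T -> X -> R) :
  (forall t, ferro (F t)) -> ferro (fun x => \prod_(t <- r) F t x).
Proof.
move=> hF; elim: r => [|t r IH].
  have -> : (fun x : X => \prod_(t <- [::]) F t x) = (fun _ => 1)
    by apply: functional_extensionality => x; rewrite big_nil.
  exact: ferro1.
have -> : (fun x : X => \prod_(t0 <- t :: r) F t0 x) = (fun x => F t x * \prod_(t0 <- r) F t0 x)
  by apply: functional_extensionality => x; rewrite big_cons.
exact: ferro_mul.
Qed.

Lemma ferro_lin c d p : 0 <= d -> d < c -> ferro (fun x : X => c + d * mono R p x).
Proof.
move=> hd hdc.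
have -> : (fun x : X => c + d * mono R p x) = (fun x => 1 * (c + d * mono R p x))
  by apply: functional_extensionality => x; rewrite mul1r.
exact: ferroF (ferro1 _ _) hd hdc.
Qed.

Lemma mono2 (i j : V) (x : X) : mono R [:: i; j] x = sp (x i) * sp (x j).
Proof. by rewrite /mono !big_cons big_nil mulr1. Qed.

Lemma Wt_prod J x : Wt J x =
  \prod_(i : V) \prod_(j : V) (chR (J i j) + shR (J i j) * mono R [:: i; j] x).
Proof.
rewrite /Wt expR_sum; apply: eq_bigr => i _; rewrite expR_sum; apply: eq_bigr => j _.
rewrite mono2; apply: expR_pm.
by case: (x i); case: (x j); rewrite /spin /= ?mulr1 ?mulrNN ?mulr1 ?mulN1r ?mulrN1; auto.
Qed.

Lemma ferro_Wt J : (forall i j, 0 <= J i j) -> ferro (Wt J).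
Proof.
move=> hJ.
have -> : Wt J = (fun x => \prod_(i <- enum V) \prod_(j <- enum V)
                   (chR (J i j) + shR (J i j) * mono R [:: i; j] x)).
  apply: functional_extensionality => x; rewrite Wt_prod big_enum /=.
  by apply: eq_bigr => i _; rewrite big_enum.
apply: ferro_prod => i; apply: ferro_prod => j; apply: ferro_lin.
  exact: shR_ge0.
exact: shR_lt_chR.
Qed.

Lemma Wt_add J1 J2 x : Wt (fun i j => J1 i j + J2 i j) x = Wt J1 x * Wt J2 x.
Proof.
rewrite /Wt -expRD -big_split /=; congr expR; apply: eq_bigr => i _.
by rewrite -big_split; apply: eq_bigr => j _; rewrite mulrDl.
Qed.

Lemma corr_Wt_mono J1 J2 p : (forall i j, 0 <= J1 i j <= J2 i j) ->
  corr (Wt J1) (mono R p) <= corr (Wt J2) (mono R p).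
Proof.
move=> hJ.
have -> : Wt J2 = (fun x => Wt J1 x * Wt (fun i j => J2 i j - J1 i j) x).
  apply: functional_extensionality => x; rewrite -Wt_add; congr Wt.
  by apply: functional_extensionality => i; apply: functional_extensionality => j; ring.
apply: corr_mono; apply: ferro_Wt => i j; have := hJ i j; case/andP => h1 h2 //.
by rewrite subr_ge0.
Qed.

End Weights.

Section Decim.
Variable R : realType.
Variable V : finType.
Notation X := {ffun V -> bool}.
Notation sp := (@spin R).

Definition flip (v : V) (x : X) : X := [ffun i => if i == v then ~~ x i else x i].

Lemma flipK v : involutive (flip v).
Proof.
move=> x; apply/ffunP => i; rewrite !ffunE; case: (i == v) => //; exact: negbK.
Qed.

Lemma sum_flip v (F : X -> R) : \sum_(x : X) F (flip v x) = \sum_(x : X) F x.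
Proof. by rewrite [in RHS](reindex_inj (inv_inj (flipK v))). Qed.

Lemma spin_flip v x i : sp (flip v x i) = if i == v then - sp (x i) else sp (x i).
Proof. by rewrite ffunE; case: (i == v) => //; case: (x i); rewrite /spin /= ?opprK. Qed.

Lemma spin_flip_ne v x i : i != v -> sp (flip v x i) = sp (x i).
Proof. by rewrite spin_flip => /negbTE ->. Qed.

Lemma spin_flip_eq v x : sp (flip v x v) = - sp (x v).
Proof. by rewrite spin_flip eqxx. Qed.

Lemma sum_sym v (F H : X -> R) :
  (forall x, F x + F (flip v x) = H x + H x) -> \sum_(x : X) F x = \sum_(x : X) H x.
Proof.
move=> e.
have : \sum_(x : X) F x + \sum_(x : X) F x = \sum_(x : X) H x + \sum_(x : X) H x.
  rewrite -{2}(sum_flip v) -!big_split /=; apply: eq_bigr => x _; exact: e.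
lra.
Qed.

Definition Phi (C D : R) (a : V) (p : seq V) (x : X) : R :=
  \prod_(q <- zip (a :: p) p) (C + D * (sp (x q.1) * sp (x q.2))).

Lemma mem_zip2 (s t : seq V) q : q \in zip s t -> q.1 \in s /\ q.2 \in t.
Proof.
elim: s t => [|y s IH] [|z t] //=; rewrite in_cons => /orP [/eqP -> | /IH [h1 h2]] /=.
  by rewrite !mem_head.
by rewrite !in_cons h1 h2 !orbT.
Qed.

Lemma Phi_flip C D a p w x : w \notin a :: p -> Phi C D a p (flip w x) = Phi C D a p x.
Proof.
move=> hw; rewrite /Phi; apply: eq_big_seq => q /mem_zip2 [h1 h2].
rewrite !spin_flip_ne //; apply: contraNneq hw => <- //.
by rewrite in_cons h2 orbT.
Qed.

Lemma internal_cons (a v : V) p : internal a (v :: p) = belast v p.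
Proof. by []. Qed.

Lemma decim C D a v p (Rf : X -> R) :
  uniq (a :: v :: p) ->
  (forall w, w \in internal a (v :: p) -> forall x, Rf (flip w x) = Rf x) ->
  \sum_(x : X) Rf x * Phi C D a (v :: p) x =
  \sum_(x : X) Rf x * (C ^+ (size p).+1 + D ^+ (size p).+1 * (sp (x a) * sp (x (last v p)))).
Proof.
elim: p a v Rf => [|w p IH] a v Rf hu hR.
  by apply: eq_bigr => x _; rewrite /Phi /= big_cons big_nil mulr1 !expr1.
have e1 : forall x, Rf x * Phi C D a [:: v, w & p] x =
   (Rf x * (C + D * (sp (x a) * sp (x v)))) * Phi C D v (w :: p) x.
  by move=> x; rewrite /Phi /= big_cons /= mulrA.
under eq_bigr => x _ do rewrite e1.
move: hu; rewrite /= !in_cons !negb_or => /andP [/and3P [hav haw hap] /andP [/andP [hvw hvp] hu]].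
have hsub : forall u, u \in belast w p -> u \in w :: p by move=> u /mem_belast.
rewrite IH; last first.
- move=> u; rewrite internal_cons => hu' x.
  have hu2 := hsub u hu'.
  rewrite hR; last by rewrite internal_cons /= in_cons hu' orbT.
  have haW : a \notin w :: p by rewrite in_cons negb_or haw hap.
  have hvW : v \notin w :: p by rewrite in_cons negb_or hvw hvp.
  congr (_ * (_ + _ * (_ * _))); apply: spin_flip_ne.
    by apply: contraNneq haW => ->.
  by apply: contraNneq hvW => ->.
- by rewrite /= in_cons negb_or hvw hvp hu.
apply: (sum_sym (v:=v)) => x.
have hbv : last w p != v.
  have := mem_last w p; rewrite in_cons => /orP [/eqP -> | h]; first by rewrite eq_sym.
  by apply: contraNneq hvp => <-.
rewrite hR; last by rewrite internal_cons /= mem_head.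
rewrite spin_flip_eq (spin_flip_ne _ hav) (spin_flip_ne _ hbv) /=.
have h := @spin_sq R (x v).
rewrite [C ^+ (size p).+2]exprS [D ^+ (size p).+2]exprS.
set K := C ^+ (size p).+1; set L := D ^+ (size p).+1.
set sa := sp (x a); set sv := sp (x v); set sb := sp (x (last w p)).
apply/eqP; rewrite -subr_eq0; apply/eqP.
transitivity (2 * Rf x * D * L * sa * sb * (sv * sv - 1)); first by ring.
by rewrite h subrr !mulr0.
Qed.


Lemma internal_sub (a : V) (p : seq V) : {subset internal a p <= p}.
Proof. case: p => [|v p] //= w; exact: mem_belast. Qed.

Lemma internal_neq_a (a : V) (p : seq V) w : uniq (a :: p) -> w \in internal a p -> w != a.
Proof.
move=> /= /andP [hap _] /internal_sub hw; by apply: contraNneq hap => <-.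
Qed.

Lemma internal_neq_last (a : V) (p : seq V) w : uniq (a :: p) -> w \in internal a p -> w != last a p.
Proof.
case: p => [|v p] // hu hw.
have hu' : uniq (v :: p) by move: hu; rewrite cons_uniq => /andP [].
move: hu'; rewrite (lastI v p) rcons_uniq => /andP [hl _] /=.
rewrite last_rcons; by apply: contraNneq hl => <-.
Qed.

Lemma mem_path3 (a : V) (p : seq V) w : w \in a :: p -> [\/ w = a, w = last a p | w \in internal a p].
Proof.
rewrite in_cons => /orP [/eqP -> | ]; first by constructor 1.
case: p => [|v p]; first by rewrite in_nil.
move=> hw; rewrite (lastI v p) mem_rcons in_cons in hw.
case/orP: hw => [/eqP -> | h]; first by constructor 2.
by constructor 3.
Qed.

Section All.
Variables (d : nat) (P : 'I_d -> seq V) (a b : V) (C D : R).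
Hypothesis hP : forall k, [/\ uniq (a :: P k), last a (P k) = b & P k != [::]].
Hypothesis hdis : forall k j, k != j -> forall w, w \in internal a (P k) -> w \notin internal a (P j).

Definition psi (k : 'I_d) (x : X) : R :=
  C ^+ size (P k) + D ^+ size (P k) * (sp (x a) * sp (x b)).

Lemma psi_flip k w x : w != a -> w != b -> psi k (flip w x) = psi k x.
Proof.
by move=> ha hb; rewrite /psi !spin_flip_ne // eq_sym.
Qed.

Lemma decim_all (r : seq 'I_d) (Rf : X -> R) :
  uniq r ->
  (forall k, k \in r -> forall w, w \in internal a (P k) -> forall x, Rf (flip w x) = Rf x) ->
  \sum_(x : X) Rf x * \prod_(k <- r) Phi C D a (P k) x =
  \sum_(x : X) Rf x * \prod_(k <- r) psi k x.
Proof.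
elim: r Rf => [|k r IH] Rf hu hR; first by apply: eq_bigr => x _; rewrite !big_nil.
move: hu => /= /andP [hkr hu].
have [hu1 hl1 hn1] := hP k.
under eq_bigr => x _ do rewrite big_cons mulrA.
rewrite (IH (fun x => Rf x * Phi C D a (P k) x)) //; last first.
  move=> j hj w hw x; rewrite (hR j); last 2 first.
  - by rewrite in_cons hj orbT.
  - by [].
    have [huj hlj _] := hP j.
    congr (_ * _); apply: Phi_flip.
    apply/negP => /mem_path3 [ha | hb | hi].
    - by move: (internal_neq_a huj hw); rewrite ha eqxx.
    - by move: (internal_neq_last huj hw); rewrite hb hl1 hlj eqxx.
    - have hjk : j != k by apply: contraNneq hkr => <-.
      by move: (hdis hjk hw); rewrite hi.
transitivity (\sum_(x : X) (Rf x * \prod_(j <- r) psi j x) * Phi C D a (P k) x).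
  by apply: eq_bigr => x _; ring.
case E: (P k) hu1 hl1 hn1 => [|v p] // hu1 hl1 _.
rewrite decim //; last first.
  move=> w hw x; rewrite (hR k) ?mem_head //; last by rewrite E.
  congr (_ * _); apply: eq_bigr => j _; apply: psi_flip.
    exact: (internal_neq_a hu1 hw).
  by rewrite -hl1; exact: (internal_neq_last hu1 hw).
apply: eq_bigr => x _; rewrite big_cons /psi E /=.
move: hl1 => /= ->; ring.
Qed.

End All.

Lemma sum_pm (a b : V) (G : R -> R) : a != b ->
  \sum_(x : X) G (sp (x a) * sp (x b)) = \sum_(x : X) ((G 1 + G (-1)) / 2).
Proof.
move=> hab; apply: (sum_sym (v:=b)) => x.
rewrite spin_flip_eq (spin_flip_ne _ hab) mulrN.
case: (x a); case: (x b); rewrite /spin ?mulr1 ?mulrN1 ?mulN1r ?opprK.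
all: by field.
Qed.

End Decim.

Section Comb.
Variable V : finType.

Lemma zip_path (e : rel V) (a : V) p q : path e a p -> q \in zip (a :: p) p -> e q.1 q.2.
Proof.
elim: p a => [|v p IH] a //= /andP [hav hp]; rewrite in_cons => /orP [/eqP -> //| h].
exact: IH hp h.
Qed.

Lemma zip_index (s : seq V) u v : uniq s -> (u, v) \in zip s (behead s) ->
  index v s = (index u s).+1.
Proof.
elim: s => [|x [|y s] IH] //= /andP [hx hu]; rewrite in_cons => /orP [/eqP [-> ->] | h].
  have hxy : x != y by apply: contraNneq hx => ->; exact: mem_head.
  by rewrite (negbTE hxy) !eqxx.
have [h1 h2] := mem_zip2 h.
have := IH hu h; rewrite /= => ->.
have hxu : x != u by apply: contraNneq hx => ->.
have hxv : x != v.
  apply: contraNneq hx => ->; rewrite in_cons h2 orbT //.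
rewrite (negbTE hxu) (negbTE hxv) //=.
Qed.

Lemma zip_uniq (a : V) p : uniq (a :: p) -> uniq (zip (a :: p) p).
Proof.
move=> /andP [_ hu]; apply: (map_uniq (f := snd)).
by rewrite -/(unzip2 _) unzip2_zip //= leqnSn.
Qed.

Lemma zip_both (a : V) p i j : uniq (a :: p) -> (i, j) \in zip (a :: p) p ->
  (j, i) \in zip (a :: p) p -> False.
Proof.
move=> hu h1 h2.
have e1 := zip_index hu h1; have e2 := zip_index hu h2.
lia.
Qed.

Lemma zip_ab (a b : V) p : uniq (a :: p) -> last a p = b ->
  (a, b) \in zip (a :: p) p -> p = [:: b].
Proof.
case: p => [|v p] // hu hl h.
rewrite /= in_cons in h; case/orP: h => [/eqP [hv] | h].
  case: p hu hl => [|w p] hu hl; first by rewrite hv.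
  exfalso; have hvW : v \notin w :: p by move: hu => /= /andP [_ /andP [-> _]].
  move: hvW; rewrite -hv -hl /=.
  by rewrite mem_last.
have [h1 _] := mem_zip2 h.
by move: hu => /andP [hnot _]; move: hnot; rewrite /= h1.
Qed.

Section Paths.
Variables (e : rel V) (a b : V) (d : nat) (P : 'I_d -> seq V).
Hypothesis hsg : simple_graph e.
Hypothesis hab : a != b.
Hypothesis hinj : injective P.
Hypothesis hpath : forall k, [/\ uniq (a :: P k), last a (P k) = b & path e a (P k)].
Hypothesis hdis : forall k j, k != j -> forall w, w \in internal a (P k) -> w \notin internal a (P j).

Definition fw k := zip (a :: P k) (P k).
Definition fc k i j : nat := ((i, j) \in fw k) + ((j, i) \in fw k).

Lemma fw_uniq k : uniq (fw k).
Proof. by have [hu _ _] := hpath k; exact: zip_uniq. Qed.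

Lemma fc_le1 k i j : (fc k i j <= 1)%N.
Proof.
rewrite /fc; have [hu _ _] := hpath k.
case h1 : ((i, j) \in fw k); case h2 : ((j, i) \in fw k) => //.
exfalso; exact: zip_both hu h1 h2.
Qed.

Lemma fw_edge k i j : (i, j) \in fw k -> e i j.
Proof. by have [_ _ hp] := hpath k => h; exact: (zip_path hp h). Qed.

Lemma fc_edge k i j : (0 < fc k i j)%N -> e i j.
Proof.
rewrite /fc; case h1 : ((i, j) \in fw k); first by move=> _; exact: fw_edge h1.
case h2 : ((j, i) \in fw k) => // _.
have [hs _] := hsg; rewrite hs; exact: fw_edge h2.
Qed.

Lemma fw_mem k i j : (i, j) \in fw k -> i \in a :: P k /\ j \in a :: P k.
Proof.
move=> /mem_zip2 [h1 h2]; split => //=; by rewrite in_cons h2 orbT.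
Qed.

Lemma fc_mem k i j : (0 < fc k i j)%N -> i \in a :: P k /\ j \in a :: P k.
Proof.
rewrite /fc; case h1 : ((i, j) \in fw k); first by move=> _; exact: fw_mem h1.
case h2 : ((j, i) \in fw k) => // _.
by have [] := fw_mem h2.
Qed.

Lemma two_paths k k' w : k != k' -> w \in a :: P k -> w \in a :: P k' -> w = a \/ w = b.
Proof.
move=> hk h1 h2; have [hu1 hl1 _] := hpath k; have [hu2 hl2 _] := hpath k'.
case/mem_path3: h1 => [-> | -> | hi]; [by left | by right; rewrite hl1 |].
exfalso; case/mem_path3: h2 => [ha | hb | hi2].
- by move: (internal_neq_a hu1 hi); rewrite ha eqxx.
- by move: (internal_neq_last hu1 hi); rewrite hb hl2 hl1 eqxx.
- by move: (hdis hk hi); rewrite hi2.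
Qed.

Lemma fc_ab k : (0 < fc k a b)%N -> P k = [:: b].
Proof.
have [hu hl _] := hpath k.
rewrite /fc; case h1 : ((a, b) \in fw k); first by move=> _; exact: zip_ab hu hl h1.
case h2 : ((b, a) \in fw k) => // _.
have [_ h] := mem_zip2 h2; move: hu => /andP [hn _]; by move: hn; rewrite /= h.
Qed.

Lemma fc_cross k k' i j : k != k' -> (0 < fc k i j)%N -> (0 < fc k' i j)%N -> False.
Proof.
move=> hk h1 h2.
have [hi1 hj1] := fc_mem h1; have [hi2 hj2] := fc_mem h2.
have hij : i != j.
  apply/eqP => eij; have [_ hirr] := hsg; move: (fc_edge h1); rewrite eij.
  by rewrite (negbTE (hirr j)).
have fsym : forall k0, fc k0 i j = fc k0 j i by move=> k0; rewrite /fc addnC.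
have abcase : forall k0, (0 < fc k0 i j)%N -> P k0 = [:: b].
  move=> k0 h0.
  case: (two_paths hk hi1 hi2) => ei; case: (two_paths hk hj1 hj2) => ej.
  - by move: hij; rewrite ei ej eqxx.
  - by rewrite ei ej in h0; exact: fc_ab.
  - by rewrite fsym ei ej in h0; exact: fc_ab.
  - by move: hij; rewrite ei ej eqxx.
have := abcase _ h1; rewrite -(abcase _ h2) => /hinj ekk.
by move: hk; rewrite ekk eqxx.
Qed.

Lemma sum_fc_le i j : (\sum_(k < d) fc k i j <= e i j)%N.
Proof.
case: (boolP [exists k, 0 < fc k i j]%N).
  case/existsP => k0 h0; have he := fc_edge h0; rewrite he.
  rewrite (bigD1 k0) //= big1 ?addn0 ?fc_le1 // => k hk.
  apply/eqP; rewrite -leqn0 leqNgt; apply/negP => hk0.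
  exact: fc_cross hk hk0 h0.
move=> hn; rewrite big1 // => k _; apply/eqP; rewrite -leqn0 leqNgt.
by apply/negP => hk; move: hn; rewrite negb_exists => /forallP /(_ k); rewrite hk.
Qed.

End Paths.

End Comb.

Section Final.
Variable R : realType.

Lemma ratio_mono (T u : R) : 0 <= T -> T <= u -> u < 1 -> (1 + T) / (1 - T) <= (1 + u) / (1 - u).
Proof.
move=> h0 h1 h2.
rewrite ler_pdivrMr; last lra.
rewrite mulrAC ler_pdivlMr; last lra.
have e : (1 + u) * (1 - T) - (1 + T) * (1 - u) = 2 * (u - T) by ring.
rewrite -subr_ge0 e; lra.
Qed.

Lemma final_ineq (C D : R) (d l : nat) (n : 'I_d -> nat) :
  0 < D -> D < C -> (forall k, (1 <= n k <= l)%N) ->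
  1 - 2 / (1 + (1 + (D / C) ^+ l) ^+ d / (1 - (D / C) ^+ l) ^+ d) <=
  (\prod_(k < d) (C ^+ n k + D ^+ n k) - \prod_(k < d) (C ^+ n k - D ^+ n k)) /
  (\prod_(k < d) (C ^+ n k + D ^+ n k) + \prod_(k < d) (C ^+ n k - D ^+ n k)).
Proof.
move=> hD hDC hn.
have hC : 0 < C by lra.
set t := D / C.
have ht0 : 0 < t by apply: divr_gt0.
have ht1 : t < 1 by rewrite ltr_pdivrMr // mul1r.
set T := t ^+ l.
have hT0 : 0 <= T by apply: exprn_ge0; lra.
have hT1 : T <= 1 by apply: exprn_ile1; lra.
have hCn : forall m, 0 < C ^+ m by move=> m; apply: exprn_gt0.
have hDn : forall m : nat, (0 < m)%N -> D ^+ m < C ^+ m.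
  move=> m hm; rewrite ltrXn2r; [by rewrite -lt0n | lra | lra].
set g1 := \prod_(k < d) (C ^+ n k + D ^+ n k).
set gm := \prod_(k < d) (C ^+ n k - D ^+ n k).
have hgm : 0 < gm.
  apply: prodr_gt0 => k _; rewrite subr_gt0; apply: hDn; by case/andP: (hn k).
have hg1 : 0 < g1.
  by apply: prodr_gt0 => k _; apply: addr_gt0 => //; apply: exprn_gt0.
have eQ : (g1 - gm) / (g1 + gm) = 1 - 2 / (1 + g1 / gm).
  by field; rewrite !lt0r_neq0 // addr_gt0.
set r := (1 + T) / (1 - T).
have hr0 : 0 <= r.
  apply: divr_ge0; lra.
have hfac : forall k, r <= (C ^+ n k + D ^+ n k) / (C ^+ n k - D ^+ n k).
  move=> k; have /andP [hk1 hkl] := hn k.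
  have hlt := hDn _ hk1; have hc := hCn (n k).
  have -> : (C ^+ n k + D ^+ n k) / (C ^+ n k - D ^+ n k) = (1 + t ^+ n k) / (1 - t ^+ n k).
    rewrite /t expr_div_n; field; rewrite lt0r_neq0 //= lt0r_neq0 // subr_gt0 //.
  apply: ratio_mono => //.
    by rewrite /T; apply: ler_wiXn2l => //; lra.
  by rewrite exprn_ilt1 //; [rewrite -lt0n | lra].
have hQ : r ^+ d <= g1 / gm.
  rewrite /g1 /gm -prodf_div.
  have -> : r ^+ d = \prod_(k < d) r by rewrite prodr_const card_ord.
  apply: ler_prod => k _; rewrite hr0; exact: hfac k.
rewrite eQ -expr_div_n -/r.
have hX : 0 <= r ^+ d by apply: exprn_ge0.
suff : 2 / (1 + g1 / gm) <= 2 / (1 + r ^+ d) by lra.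
rewrite ler_pdivrMr; last lra.
rewrite mulrAC ler_pdivlMr; last lra.
nra.
Qed.

End Final.

Section Assembly.
Variable R : realType.
Variable V : finType.
Notation X := {ffun V -> bool}.
Notation sp := (@spin R).

Lemma count_sum (l : seq (V * V)) (f : V -> V -> R) :
  \sum_(i : V) \sum_(j : V) (count_mem (i, j) l)%:R * f i j = \sum_(q <- l) f q.1 q.2.
Proof.
elim: l => [|q l IH].
  by rewrite big_nil big1 // => i _; rewrite big1 // => j _; rewrite mul0r.
rewrite big_cons -IH /=.
transitivity (\sum_(i : V) \sum_(j : V) ((q == (i, j))%:R * f i j) +
              \sum_(i : V) \sum_(j : V) (count_mem (i, j) l)%:R * f i j).
  rewrite -big_split; apply: eq_bigr => i _; rewrite -big_split; apply: eq_bigr => j _.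
  by rewrite natrD mulrDl.
congr (_ + _).
rewrite pair_big /= (bigD1 q) //= big1 ?addr0.
  by case: q => ?? /=; rewrite eqxx mul1r.
move=> [i j] /= hne; rewrite eq_sym in hne; by rewrite (negbTE hne) mul0r.
Qed.

Definition JG (e : rel V) (lam : R) (i j : V) : R := if e i j then lam / 2 else 0.

Lemma ising_weight_Wt e lam : ising_weight e lam = Wt (JG e lam).
Proof.
apply: functional_extensionality => x; rewrite /ising_weight /Wt /ising_energy; congr expR.
rewrite mulr_sumr; apply: eq_bigr => i _; rewrite mulr_sumr big_mkcond /=.
by apply: eq_bigr => j _; rewrite /JG; case: (e i j) => //; rewrite mul0r.
Qed.

Lemma ising_corr_corr e lam a b :
  ising_corr e lam a b = corr (Wt (JG e lam)) (mono R [:: a; b]).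
Proof.
rewrite /ising_corr /corr /wsum /ising_Z -ising_weight_Wt; congr (_ / _).
  by apply: eq_bigr => x _; rewrite mono2.
by apply: eq_bigr => x _; rewrite mul1r.
Qed.

Section Paths.
Variables (e : rel V) (a b : V) (d : nat) (P : 'I_d -> seq V) (lam : R).
Hypothesis hsg : simple_graph e.
Hypothesis hab : a != b.
Hypothesis hinj : injective P.
Hypothesis hpath : forall k, [/\ uniq (a :: P k), last a (P k) = b & path e a (P k)].
Hypothesis hdis : forall k j, k != j -> forall w, w \in internal a (P k) -> w \notin internal a (P j).
Hypothesis hlam : 0 < lam.

Definition JH (i j : V) : R := lam / 2 * (\sum_(k < d) fc a P k i j)%:R.

Lemma JH_bounds i j : 0 <= JH i j <= JG e lam i j.
Proof.
have hl2 : 0 <= lam / 2 by apply: divr_ge0; [exact: ltW | exact: ler0n].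
have hs := sum_fc_le hsg hinj hpath hdis i j.
rewrite /JH /JG; apply/andP; split.
  apply: mulr_ge0; [done | exact: ler0n].
case: (e i j) hs => /= hs.
  rewrite -[X in _ <= X]mulr1; apply: ler_wpM2l; first done.
  by rewrite -(ler_nat R) in hs.
by move: hs; rewrite leqn0 => /eqP ->; rewrite mulr0.
Qed.

Lemma energy_JH (x : X) :
  \sum_(i : V) \sum_(j : V) JH i j * (sp (x i) * sp (x j)) =
  \sum_(k < d) \sum_(q <- fw a P k) lam * (sp (x q.1) * sp (x q.2)).
Proof.
pose m i j := sp (x i) * sp (x j).
have msym : forall i j, m i j = m j i by move=> i j; rewrite /m mulrC.
transitivity (\sum_(k < d) (lam / 2) * \sum_(i : V) \sum_(j : V) (fc a P k i j)%:R * m i j).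
  symmetry.
  under eq_bigr => k _ do rewrite mulr_sumr.
  under eq_bigr => k _ do under eq_bigr => i _ do rewrite mulr_sumr.
  rewrite exchange_big /=; apply: eq_bigr => i _.
  rewrite exchange_big /=; apply: eq_bigr => j _.
  rewrite /JH natr_sum mulr_sumr mulr_suml; apply: eq_bigr => k _; rewrite /m; ring.
apply: eq_bigr => k _.
have hu := fw_uniq hpath k.
have efc : forall i j, (fc a P k i j)%:R * m i j =
   (count_mem (i, j) (fw a P k))%:R * m i j + (count_mem (j, i) (fw a P k))%:R * m j i.
  move=> i j; rewrite !count_uniq_mem // /fc natrD mulrDl (msym j i) //.
under eq_bigr => i _ do under eq_bigr => j _ do rewrite efc.
under eq_bigr => i _ do rewrite big_split.
rewrite big_split /=.
rewrite [X in _ * (_ + X)]exchange_big /=.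
rewrite !(count_sum (fw a P k) m) -mulr_sumr /m.
by field.
Qed.

Lemma Wt_JH (x : X) :
  Wt JH x = \prod_(k < d) Phi (chR lam) (shR lam) a (P k) x.
Proof.
rewrite /Wt energy_JH expR_sum; apply: eq_bigr => k _; rewrite expR_sum /Phi.
apply: eq_bigr => q _; apply: expR_pm.
by case: (x q.1); case: (x q.2); rewrite /spin ?mulr1 ?mulrNN ?mulr1 ?mulN1r ?mulrN1; auto.
Qed.

Lemma hP3 k : [/\ uniq (a :: P k), last a (P k) = b & P k != [::]].
Proof.
have [h1 h2 _] := hpath k; split => //.
by apply/eqP => E; move: h2; rewrite E /= => eab; move: hab; rewrite eab eqxx.
Qed.

Lemma wsum_JH (H : R -> R) :
  \sum_(x : X) H (sp (x a) * sp (x b)) * Wt JH x =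
  \sum_(x : X) ((H 1 * \prod_(k < d) (chR lam ^+ size (P k) + shR lam ^+ size (P k) * 1) +
                 H (-1) * \prod_(k < d) (chR lam ^+ size (P k) + shR lam ^+ size (P k) * (-1))) / 2).
Proof.
under eq_bigr => x _ do rewrite Wt_JH.
rewrite (decim_all (chR lam) (shR lam) hP3 hdis (r := index_enum 'I_d)
   (Rf := fun x => H (sp (x a) * sp (x b)))); last 2 first.
- exact: index_enum_uniq.
- move=> k _ w hw x; have [hu hl _] := hP3 k.
  have hwa := internal_neq_a hu hw; have hwb := internal_neq_last hu hw; rewrite hl in hwb.
  by rewrite !spin_flip_ne // eq_sym.
rewrite -(sum_pm (fun y => H y * \prod_(k < d) (chR lam ^+ size (P k) + shR lam ^+ size (P k) * y)) hab).
by apply: eq_bigr => x _; rewrite /psi.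
Qed.

End Paths.

End Assembly.

Lemma tanh_eq (R : realType) (lam : R) : tanhR lam = shR lam / chR lam.
Proof.
rewrite /tanhR /shR /chR; field.
have := expR_gt0 lam; have := expR_gt0 (- lam); move=> h1 h2.
by rewrite lt0r_neq0 //; apply: addr_gt0.
Qed.

Lemma sum_const_ratio (R : realType) (V : finType) (c1 c2 : R) : 0 < c2 ->
  (\sum_(x : {ffun V -> bool}) c1) / (\sum_(x : {ffun V -> bool}) c2) = c1 / c2.
Proof.
move=> hc2.
have hN0 : (0 < #|[pred x : {ffun V -> bool} | true]|)%N.
  apply/card_gt0P; exists [ffun => true]; exact: isT.
rewrite !sumr_const.
move: hN0; move: (#|_|) => N hN0.
have hN' : (N%:R : R) != 0.
  by rewrite pnatr_eq0; apply/eqP => h; rewrite h in hN0.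
by rewrite -[c1 *+ N]mulr_natr -[c2 *+ N]mulr_natr invfM mulrACA divff // mulr1.
Qed.

Unset Implicit Arguments. Set Strict Implicit.

Theorem lemma3 (R : realType) (V : finType) (e : rel V) (lam : R)
  (l d : nat) (a b : V) :
  simple_graph e -> 0 < lam -> ld_connected e l d a b ->
  1 - 2 / (1 + (1 + tanhR lam ^+ l) ^+ d / (1 - tanhR lam ^+ l) ^+ d)
    <= ising_corr e lam a b.
Proof.
move=> hsg hlam [P [hinj [hp hdisall]]].
have hD : 0 < shR lam.
  rewrite /shR; apply: divr_gt0; last exact: ltr0n.
  by rewrite subr_gt0 ltr_expR; lra.
have hDC := shR_lt_chR lam.
have hC : 0 < chR lam by lra.
have hJG : forall i j, 0 <= JG e lam i j.
  move=> i j; rewrite /JG; case: (e i j) => //; apply: divr_ge0; [exact: ltW | exact: ler0n].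
rewrite tanh_eq ising_corr_corr.
case: (eqVneq a b) => [eab | hab].
  subst b.
  have -> : mono R [:: a; a] = (fun _ => 1).
    by apply: functional_extensionality => x; rewrite mono2 spin_sq.
  have hW := wsum_gt0 (ferro_Wt hJG).
  rewrite /corr divff ?lt0r_neq0 //.
  set t := shR lam / chR lam.
  have ht0 : 0 <= t by apply: divr_ge0; apply: ltW.
  have ht1 : t <= 1 by rewrite ler_pdivrMr // mul1r; apply: ltW.
  have hT1 : t ^+ l <= 1 by apply: exprn_ile1.
  have hT0 : 0 <= t ^+ l by apply: exprn_ge0.
  have hX : 0 <= (1 + t ^+ l) ^+ d / (1 - t ^+ l) ^+ d.
    apply: divr_ge0; apply: exprn_ge0; lra.
  have : 0 <= 2 / (1 + (1 + t ^+ l) ^+ d / (1 - t ^+ l) ^+ d).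
    apply: divr_ge0; [exact: ler0n | lra].
  lra.
have hpath : forall k, [/\ uniq (a :: P k), last a (P k) = b & path e a (P k)].
  move=> k; have [h _] := hp k; move: h; rewrite /is_path_between.
  by case/and3P => h1 /eqP h2 h3.
have hdis : forall k j, k != j -> forall w, w \in internal a (P k) -> w \notin internal a (P j).
  by move=> k j hkj w hw; have /allP := hdisall k j hkj; apply.
apply: le_trans (corr_Wt_mono _ (JH_bounds hsg hinj hpath hdis hlam)).
have e1 := wsum_JH lam hab hpath hdis (fun y => y).
have e2 := wsum_JH lam hab hpath hdis (fun _ => 1).
rewrite /corr /wsum.
have -> : \sum_(x : {ffun V -> bool}) mono R [:: a; b] x * Wt (JH a P lam) x =
          \sum_(x : {ffun V -> bool}) (fun y => y) (spin R (x a) * spin R (x b)) * Wt (JH a P lam) x.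
  by apply: eq_bigr => x _; rewrite mono2.
set C := chR lam; set D := shR lam.
have hn : forall k, (1 <= size (P k) <= l)%N.
  move=> k; have [_ hl] := hp k; have [_ _ hne] := hP3 hab hpath k.
  by rewrite hl andbT lt0n size_eq0.
have E1 : \prod_(k < d) (C ^+ size (P k) + D ^+ size (P k) * 1) =
          \prod_(k < d) (C ^+ size (P k) + D ^+ size (P k)).
  by apply: eq_bigr => k _; rewrite mulr1.
have E2 : \prod_(k < d) (C ^+ size (P k) + D ^+ size (P k) * -1) =
          \prod_(k < d) (C ^+ size (P k) - D ^+ size (P k)).
  by apply: eq_bigr => k _; rewrite mulrN1.
have hgm : 0 < \prod_(k < d) (C ^+ size (P k) - D ^+ size (P k)).
  apply: prodr_gt0 => k _; rewrite subr_gt0 ltrXn2r; [| exact: ltW | exact: hDC].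
  by have /andP [h _] := hn k; rewrite -lt0n.
have hg1 : 0 < \prod_(k < d) (C ^+ size (P k) + D ^+ size (P k)).
  by apply: prodr_gt0 => k _; apply: addr_gt0; apply: exprn_gt0.
rewrite e1 e2 E1 E2 sum_const_ratio; last first.
  apply: divr_gt0; last exact: ltr0n.
  by rewrite !mul1r; apply: addr_gt0.
set g1 := \prod_(k < d) (C ^+ size (P k) + D ^+ size (P k)).
set gm := \prod_(k < d) (C ^+ size (P k) - D ^+ size (P k)).
have -> : (1 * g1 + -1 * gm) / 2 / ((1 * g1 + 1 * gm) / 2) = (g1 - gm) / (g1 + gm).
  field; rewrite lt0r_neq0 //; apply: addr_gt0 => //.
exact: (final_ineq (n := fun k => size (P k)) hD hDC hn).
Qed.
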